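(* Let $m\ge2$. There exist traceless $m\times m$ real matrices $A$ and $B$ such that, with \[ V_1(x)=Ax,\quad V_2(x)=Bx,\quad V_3(x)=\begin{pmatrix}0\\ \vdots\\ 0\\ 1\end{pmatrix},\quad V_4(x)=\begin{pmatrix}(x^m)^2\\ 0\\ \vdots\\ 0\end{pmatrix},\quad V_5(x)=\begin{pmatrix}x^1x^m\\ x^2x^m\\ \vdots\\ (x^m)^2\end{pmatrix} \] (where $x=(x^1,\ldots,x^m)$ and $V_5(x)=x^m\,x$), the Lie algebra $\mathrm{Lie}(V_1,\ldots,V_5)$ contains all polynomial vector fields on $\mathbb{R}^m$.
   Context: For smooth vector fields $U,V$ on $\mathbb{R}^m$, the Lie bracket is $[U,V](x)=DV(x)U(x)-DU(x)V(x)$, with $DU$ the Jacobian matrix. $\mathrm{Lie}(U_1,\ldots,U_d)$ is the smallest linear space of vector fields containing $U_1,\ldots,U_d$ and closed under Lie brackets. A polynomial vector field is one whose components are polynomials in $x^1,\ldots,x^m$. A traceless matrix is one with trace zero. *)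

(* Defs.v *)
From HB Require Import structures.
From mathcomp Require Import all_boot all_order all_algebra.
From mathcomp Require Import reals.
From mathcomp Require Import mpoly.

Set Implicit Arguments.
Unset Strict Implicit.
Unset Printing Implicit Defensive.

Import Order.TTheory GRing.Theory Num.Theory.
Local Open Scope ring_scope.

Section VF.
Variables (R : realType) (m : nat).

Definition pvf := 'I_m -> {mpoly R[m]}.

(* Jacobian entry DU(x)_{ij} = d U^i / d x^j is mderiv j (U i). *)
(* Lie bracket [U,V] = DV U - DU V. *)
Definition lie_bracket (U V : pvf) : pvf :=
  fun i => \sum_(j < m) (mderiv j (V i) * U j - mderiv j (U i) * V j).

(* Propositional membership in a list (functions are not an eqType). *)
Fixpoint mem_list (V : pvf) (s : seq pvf) : Prop :=
  if s is W :: s' then W = V \/ mem_list V s' else False.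

Inductive in_Lie (gens : seq pvf) : pvf -> Prop :=
| in_Lie_gen V : mem_list V gens -> in_Lie gens V
| in_Lie_zero : in_Lie gens (fun _ => 0)
| in_Lie_add U V : in_Lie gens U -> in_Lie gens V ->
    in_Lie gens (fun i => U i + V i)
| in_Lie_scale (c : R) U : in_Lie gens U -> in_Lie gens (fun i => c *: U i)
| in_Lie_bracket U V : in_Lie gens U -> in_Lie gens V ->
    in_Lie gens (lie_bracket U V).

(* The coordinate function x^(k+1) (0-based nat index k), 0 if k >= m. *)
Definition coordX (k : nat) : {mpoly R[m]} :=
  if insub k is Some i then 'X_i else 0.

Definition linear_vf (A : 'M[R]_m) : pvf :=
  fun i => \sum_(j < m) A i j *: 'X_j.

Definition V3 : pvf := fun i => if val i == m.-1 then 1 else 0.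
Definition V4 : pvf := fun i => if val i == 0%N then coordX m.-1 ^+ 2 else 0.
Definition V5 : pvf := fun i => coordX m.-1 * 'X_i.

End VF.

(* Main.v *)
Require Import Defs.
From HB Require Import structures.
From mathcomp Require Import all_boot all_order all_algebra.
From mathcomp Require Import reals.
From mathcomp Require Import mpoly.
From mathcomp Require Import zify.
From Stdlib Require Import FunctionalExtensionality.
Import Order.TTheory GRing.Theory Num.Theory.
Local Open Scope ring_scope.
Set Implicit Arguments.
Unset Strict Implicit.
Unset Printing Implicit Defensive.

Ltac mnm_tac :=
  intros; apply/mnmP => ?;
  repeat match goal with
  | H : is_true (leq _ _) |- _ => revert H
  | H : @eq nat _ _ |- _ => revert H
  end;
  rewrite ?(mnmDE, mnmBE, mnm1E, mnm0E);
  repeat (match goal with |- context [?a == ?b] =>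
    let H := fresh "H" in case: (a =P b) => H; try subst end);
  simpl in *; intros; try congruence;
  repeat match goal with
  | H : ~ (@eq (ordinal _) _ _) |- _ => clear H
  end; lia.

Section Main.
Variables (R : realType) (p : nat).
Local Notation m := p.+2.
Local Notation pvf := (pvf R m).

Definition mf (g : 'X_{1..m}) (k : 'I_m) : pvf :=
  fun i => if i == k then 'X_[g] else 0.

Lemma sum_if_eq (F : 'I_m -> {mpoly R[m]}) i c :
  \sum_(j < m) F j * (if j == i then c else 0) = F i * c.
Proof.
rewrite (bigD1 i) //= eqxx big1 ?addr0 // => j /negbTE ->; by rewrite mulr0.
Qed.

Lemma bracket_mf a i b k l :
  lie_bracket (mf a i) (mf b k) l =
  (if l == k then (b i)%:R *: 'X_[a + (b - U_(i))] else 0) -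
  (if l == i then (a k)%:R *: 'X_[(a - U_(k)) + b] else 0).
Proof.
rewrite /lie_bracket /mf sumrB !sum_if_eq.
congr (_ - _).
  case: (l == k); last by rewrite mderiv0 mul0r.
  by rewrite mderivX -scalerAl mpolyXD mulrC.
case: (l == i); last by rewrite mderiv0 mul0r.
by rewrite mderivX -scalerAl mpolyXD.
Qed.

Definition A : 'M[R]_m := \matrix_(i, j) ((j : nat) == i.+1)%:R.
Definition B : 'M[R]_m := \matrix_(i, j) ((i : nat) == j.+1)%:R.
Definition gens := [:: linear_vf A; linear_vf B; @V3 R m; @V4 R m; @V5 R m].
Local Notation inL := (in_Lie gens).

Lemma trA : \tr A = 0.
Proof. rewrite /mxtrace big1 // => i _; rewrite mxE; case: eqP => //; lia. Qed.
Lemma trB : \tr B = 0.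
Proof. rewrite /mxtrace big1 // => i _; rewrite mxE; case: eqP => //; lia. Qed.

Lemma genA : inL (linear_vf A). Proof. by apply: in_Lie_gen; left. Qed.
Lemma genB : inL (linear_vf B). Proof. by apply: in_Lie_gen; right; left. Qed.
Lemma gen3 : inL (@V3 R m). Proof. by apply: in_Lie_gen; do 2 right; left. Qed.
Lemma gen4 : inL (@V4 R m). Proof. by apply: in_Lie_gen; do 3 right; left. Qed.
Lemma gen5 : inL (@V5 R m). Proof. by apply: in_Lie_gen; do 4 right; left. Qed.

Lemma inL_ext U V : inL U -> (forall i, U i = V i) -> inL V.
Proof. by move=> h e; have -> : V = U by apply: functional_extensionality => i; rewrite e. Qed.

Lemma inL_comb U V a b : inL U -> inL V -> inL (fun i => a *: U i + b *: V i).
Proof. by move=> hU hV; apply: in_Lie_add; apply: in_Lie_scale. Qed.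

Lemma inL_solve T X W (c : R) : inL X -> inL W -> c != 0 ->
  (forall l, X l = c *: T l + W l) -> inL T.
Proof.
move=> hX hW c0 e.
apply: (inL_ext (inL_comb (c^-1) (- c^-1) hX hW)) => l.
by rewrite e scalerDr scalerA mulVf // scale1r scaleNr addrK.
Qed.

Lemma inL_sum (I : Type) (r : seq I) (F : I -> pvf) :
  (forall i, inL (F i)) -> inL (fun l => \sum_(i <- r) F i l).
Proof.
move=> h; elim: r => [|x r ih].
  by apply: (inL_ext (in_Lie_zero gens)) => l; rewrite big_nil.
by apply: (inL_ext (in_Lie_add (h x) ih)) => l; rewrite big_cons.
Qed.

Lemma mderivXU t j : mderiv j ('X_t : {mpoly R[m]}) = (t == j)%:R *: 1.
Proof.
rewrite mderivX mnm1E; have [->|tj] := eqVneq t j; last by rewrite ?mulr0n !scale0r.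
have -> : (U_(j) - U_(j))%MM = 0%MM by mnm_tac.
by rewrite mpolyX0.
Qed.

Lemma dlin (M : 'M[R]_m) l j : mderiv j (linear_vf M l) = M l j *: 1.
Proof.
rewrite /linear_vf linear_sum (bigD1 j) //= big1 ?addr0.
  by rewrite mderivZ mderivXU eqxx mulr1n scale1r.
by move=> t /negbTE tj; rewrite mderivZ mderivXU tj mulr0n !scale0r scaler0.
Qed.

Definition ce k := mf 0 k.

Lemma bracket_ce_lin (M : 'M[R]_m) k l :
  lie_bracket (ce k) (linear_vf M) l = M l k *: 1.
Proof.
rewrite /lie_bracket /ce /mf sumrB sum_if_eq dlin mpolyX0 mulr1 big1 ?subr0 //.
move=> j _; case: (l == k); last by rewrite mderiv0 mul0r.
by rewrite -mpolyC1 mderivC mul0r.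
Qed.

Definition nlast : 'I_m := ord_max.

Lemma coordX_last : @coordX R m m.-1 = 'X_nlast.
Proof.
rewrite /coordX; case: insubP => [i _ e|] /=; last by rewrite ltnSn.
by congr ('X_ _); apply: val_inj.
Qed.

Lemma ce_all k : inL (ce k).
Proof.
suff H : forall d (k : 'I_m), (k + d = p.+1)%N -> inL (ce k).
  by apply: (H (p.+1 - k)%N); have := ltn_ord k; lia.
elim => [|d ih] {}k hk.
  apply: (inL_ext gen3).
  move=> i; rewrite /V3 /ce /mf mpolyX0.
  have -> : (i == k) = (val i == m.-1) by rewrite -val_eqE /=; lia.
  done.
have hk1 : (k.+1 < m)%N by lia.
have := in_Lie_bracket (ih (Ordinal hk1) ltac:(simpl; lia))
   genA.
move/inL_ext; apply => l.
rewrite bracket_ce_lin /ce /mf mxE /= mpolyX0.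
rewrite eqSS -val_eqE eq_sym; case: (_ == _); first by rewrite mulr1n scale1r.
by rewrite mulr0n scale0r.
Qed.


Lemma lin_delta i j l : linear_vf (delta_mx i j) l = mf U_(j) i l.
Proof.
rewrite /linear_vf /mf (bigD1 j) //= big1 ?addr0 => [|t tj]; rewrite mxE.
  by rewrite eqxx andbT; case: (l == i); rewrite ?mulr1n ?scale1r ?mulr0n ?scale0r.
by rewrite (negbTE tj) andbF mulr0n scale0r.
Qed.

Lemma lin_comb (M N : 'M[R]_m) a b l :
  linear_vf (a *: M + b *: N) l = a *: linear_vf M l + b *: linear_vf N l.
Proof.
rewrite /linear_vf !scaler_sumr -big_split /=; apply: eq_bigr => t _.
by rewrite !mxE scalerDl !scalerA.
Qed.

Lemma lin_one l : linear_vf (1%:M : 'M[R]_m) l = 'X_l.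
Proof.
rewrite /linear_vf (bigD1 l) //= big1 ?addr0 => [|t tl]; rewrite mxE.
  by rewrite eqxx mulr1n scale1r.
by rewrite eq_sym (negbTE tl) mulr0n scale0r.
Qed.

Lemma bracket_lin_lin (M N : 'M[R]_m) l :
  lie_bracket (linear_vf M) (linear_vf N) l = linear_vf (N *m M - M *m N) l.
Proof.
rewrite /lie_bracket.
under eq_bigr => j _ do rewrite !dlin -!scalerAl !mul1r.
rewrite /linear_vf sumrB.
under [in RHS]eq_bigr => t _ do rewrite !mxE scalerBl !scaler_suml.
rewrite sumrB; congr (_ - _); rewrite exchange_big /=; apply: eq_bigr => j _;
  by rewrite scaler_sumr; apply: eq_bigr => t _; rewrite scalerA.
Qed.

Definition LM (M : 'M[R]_m) := inL (linear_vf M).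

Lemma LM_comb M N a b : LM M -> LM N -> LM (a *: M + b *: N).
Proof. by move=> hM hN; apply: (inL_ext (inL_comb a b hM hN)) => l; rewrite lin_comb. Qed.

Lemma LM_br M N : LM M -> LM N -> LM (N *m M - M *m N).
Proof. by move=> hM hN; apply: (inL_ext (in_Lie_bracket hM hN)) => l; rewrite bracket_lin_lin. Qed.

Lemma LM_scale M (c : R) : c != 0 -> LM (c *: M) -> LM M.
Proof.
move=> c0 h; have := LM_comb (c^-1) 0 h h.
by rewrite scale0r addr0 scalerA mulVf // scale1r.
Qed.

Lemma bracket_ce_V5 k l :
  lie_bracket (ce k) (@V5 R m) l =
  linear_vf (delta_mx k nlast + (k == nlast)%:R *: 1%:M) l.
Proof.
have -> : delta_mx k nlast + (k == nlast)%:R *: 1%:M =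
  1 *: delta_mx k nlast + (k == nlast)%:R *: (1%:M : 'M[R]_m) by rewrite scale1r.
rewrite lin_comb lin_delta lin_one scale1r.
rewrite /lie_bracket /ce /mf /V5 coordX_last sumrB sum_if_eq big1 ?subr0.
  rewrite mpolyX0 mulr1 mderivM !mderivXU /mf.
  rewrite -!scalerAl !mul1r addrC; congr (_ + _); last by rewrite eq_sym.
  rewrite -scalerAr mulr1; case: (l == k); first by rewrite mulr1n scale1r.
  by rewrite mulr0n scale0r.
move=> j _; case: (l == k); last by rewrite mderiv0 mul0r.
by rewrite mpolyX0 -mpolyC1 mderivC mul0r.
Qed.


Lemma deltaB (i j j' : 'I_m) : val j = (val j').+1 -> delta_mx i j *m B = delta_mx i j'.
Proof.
move=> e; apply/matrixP => a b; rewrite !mxE (bigD1 j) //= big1 ?addr0 => [|t tj].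
  rewrite !mxE eqxx andbT e eqSS.
  have -> : ((j' : nat) == b) = (b == j') by rewrite eq_sym.
  by case: (a == i); case: (_ == _); rewrite ?mulr1n ?mulr0n ?mulr1 ?mul0r ?mulr0.
by rewrite !mxE (negbTE tj) andbF mulr0n mul0r.
Qed.

Lemma Bdelta (j : 'I_m) : B *m delta_mx nlast j = 0.
Proof.
apply/matrixP => a b; rewrite !mxE big1 // => t _; rewrite !mxE.
case e: ((a : nat) == t.+1); last by rewrite mulr0n mul0r.
have -> : (t == nlast) = false.
  by apply/negbTE; rewrite -val_eqE /=; move/eqP: e; have := ltn_ord a; lia.
by rewrite andFb mulr0n mulr0.
Qed.

Lemma LM_Z : LM (delta_mx nlast nlast + (nlast == nlast)%:R *: 1%:M).
Proof. exact: (inL_ext (in_Lie_bracket (ce_all nlast) gen5) (bracket_ce_V5 nlast)). Qed.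

Lemma LM_col k : k != nlast -> LM (delta_mx k nlast).
Proof.
move=> kn; have := inL_ext (in_Lie_bracket (ce_all k) gen5) (bracket_ce_V5 k).
by rewrite (negbTE kn) mulr0n scale0r addr0.
Qed.

Lemma LM_neg M : LM (- M) -> LM M.
Proof. by move=> h; apply: (@LM_scale _ (-1)); rewrite ?scaleN1r // oppr_eq0 oner_eq0. Qed.

Lemma LM_row (j : 'I_m) : j != nlast -> LM (delta_mx nlast j).
Proof.
move=> jn.
suff H : forall d (j : 'I_m), (j + d = p)%N -> LM (delta_mx nlast j).
  apply: (H (p - j)%N); move: jn; rewrite -val_eqE /=; have := ltn_ord j; lia.
elim => [|d ih] {jn}j hj.
  apply: LM_neg; have := LM_br LM_Z genB.
  rewrite mulmxDr mulmxDl -scalemxAr -scalemxAl mulmx1 mul1mx Bdelta.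
  have e : val nlast = (val j).+1 by rewrite /=; lia.
  by rewrite (deltaB _ e) add0r opprD addrCA subrr addr0.
have hj1 : (j.+1 < m)%N by lia.
apply: LM_neg; have := LM_br (ih (Ordinal hj1) ltac:(simpl; lia)) genB.
by rewrite Bdelta (@deltaB _ (Ordinal hj1) j) // sub0r.
Qed.

Lemma LM_off i j : i != j -> LM (delta_mx i j).
Proof.
move=> ij.
case: (i =P nlast) => [e|/eqP inl]; first by subst i; apply: LM_row; rewrite eq_sym.
case: (j =P nlast) => [e|/eqP jnl]; first by subst j; exact: LM_col.
apply: LM_neg; have := LM_br (LM_col inl) (LM_row jnl).
by rewrite mul_delta_mx_0 1?eq_sym // mul_delta_mx sub0r.
Qed.

Lemma LX i j : i != j -> inL (mf U_(j) i).
Proof. by move=> ij; apply: (inL_ext (LM_off ij)) => l; rewrite lin_delta. Qed.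


Lemma subst_mv b k i j g : inL (mf b k) -> j != k -> i != j -> (0 < b i)%N ->
  g = (U_(j) + (b - U_(i)))%MM -> inL (mf g k).
Proof.
move=> hb jk ij bi ->.
apply: (@inL_solve _ _ (fun _ => 0) (b i)%:R (in_Lie_bracket (LX ij) hb) (in_Lie_zero _)).
  by rewrite pnatr_eq0 -lt0n.
move=> l; rewrite bracket_mf mnm1E (negbTE jk) mulr0n scale0r /mf addr0.
by case: (l == k); case: (l == i); rewrite ?subr0 ?scaler0.
Qed.

Lemma mixed_mv b k0 i : i != k0 -> inL (mf b k0) ->
  inL (fun l => (b i)%:R *: mf (U_(k0) + (b - U_(i)))%MM k0 l - mf b i l).
Proof.
move=> ik hb; apply: (inL_ext (in_Lie_bracket (LX ik) hb)) => l.
rewrite bracket_mf mnm1E eqxx mulr1n scale1r /mf.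
have -> : (U_(k0) - U_(k0) + b)%MM = b by mnm_tac.
by case: (l == k0); rewrite ?scaler0.
Qed.

Definition q2 (a b : 'I_m) : 'X_{1..m} := (U_(a) + U_(b))%MM.
Definition o : 'I_m := ord0.

Lemma nlast_o : nlast != o. Proof. by rewrite -val_eqE. Qed.

Lemma V4E : inL (mf (q2 nlast nlast) o).
Proof.
apply: (inL_ext gen4) => l; rewrite /V4 /mf /q2 mpolyXD coordX_last expr2.
by congr (if _ then _ else _); rewrite -val_eqE.
Qed.

Lemma Q0 a b : a != o -> b != o -> inL (mf (q2 a b) o).
Proof.
move=> ao bo.
have h1 : inL (mf (q2 a nlast) o).
  case: (a =P nlast) => [->|/eqP an]; first exact: V4E.
  apply: (subst_mv V4E ao (i := nlast)); rewrite 1?eq_sym //.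
    by rewrite /q2 mnmDE mnm1E eqxx.
  rewrite /q2; mnm_tac.
case: (b =P nlast) => [->|/eqP bn]; first exact: h1.
apply: (subst_mv h1 bo (i := nlast)); rewrite 1?eq_sym //.
  by rewrite /q2 !mnmDE !mnm1E eqxx addn1.
rewrite /q2; mnm_tac.
Qed.

Definition Fq (q : 'I_m) : pvf := fun l => 'X_[q2 l q].

Lemma Fq_in q : inL (Fq q).
Proof.
case: (q =P nlast) => [->|/eqP qn].
  apply: (inL_ext gen5) => l; rewrite /V5 /Fq /q2 coordX_last mpolyXD mulrC //.
have nq : nlast != q by rewrite eq_sym.
apply: (inL_ext (in_Lie_bracket (LX nq) gen5)) => l.
rewrite /lie_bracket /V5 coordX_last sumrB sum_if_eq /Fq /q2 mpolyXD.
rewrite mderivM !mderivXU eqxx mulr1n scale1r mul1r.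
have -> : \sum_(i < m) (mf U_(q) nlast l)^`M(i) * ('X_nlast * 'X_i) =
          (l == nlast)%:R *: ('X_nlast * 'X_q).
  rewrite /mf; case: (l == nlast); last first.
    by rewrite mulr0n scale0r big1 // => j _; rewrite mderiv0 mul0r.
  rewrite mulr1n scale1r (bigD1 q) //= big1 ?addr0 => [|j jq].
    by rewrite mderivXU eqxx mulr1n scale1r mul1r.
  by rewrite mderivXU eq_sym (negbTE jq) mulr0n scale0r mul0r.
rewrite -scalerAr mulr1 mulrDl -scalerAl addrK.
by rewrite mulrC.
Qed.


Lemma Garg q k0 : q != k0 -> (forall i, i != k0 -> inL (mf (q2 i q) k0)) ->
  inL (mf (q2 q q) q).
Proof.
move=> qk hyp.
pose w (i : 'I_m) : R := (1 + (q == i))%:R.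
pose D i : pvf := fun l => w i *: mf (q2 k0 q) k0 l - mf (q2 i q) i l.
have hD : forall i, inL (D i).
  move=> i; case: (i =P k0) => [->|/eqP ik].
    apply: (inL_ext (in_Lie_zero _)) => l.
    by rewrite /D /w (negbTE qk) addn0 scale1r subrr.
  apply: (inL_ext (mixed_mv ik (hyp i ik))) => l; rewrite /D /w.
  have -> : (U_(k0) + (q2 i q - U_(i)))%MM = q2 k0 q by rewrite /q2; mnm_tac.
  by rewrite /q2 mnmDE !mnm1E eqxx.
have hG : inL (mf (q2 k0 q) k0).
  apply: (@inL_solve _ (fun l => Fq q l + \sum_(i < m) D i l) (fun _ => 0)
     (m.+1)%:R (in_Lie_add (Fq_in q) (inL_sum (index_enum _) hD)) (in_Lie_zero _)).
    by rewrite pnatr_eq0.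
  move=> l; rewrite addr0 /D sumrB -scaler_suml.
  have -> : \sum_(i < m) mf (q2 i q) i l = Fq q l.
    rewrite /mf (bigD1 l) //= eqxx big1 ?addr0 // => j jl.
    by rewrite eq_sym (negbTE jl).
  rewrite addrC subrK; congr (_ *: _).
  rewrite /w (eq_bigr (fun i => 1 + (q == i)%:R)); last by move=> i _; rewrite natrD.
  rewrite big_split /= sumr_const card_ord (bigD1 q) //= eqxx big1 ?addr0.
    by rewrite -natr1 -[1 *+ m]/(m%:R).
  by move=> j jq; rewrite eq_sym (negbTE jq).
apply: (@inL_solve _ (D q) (fun l => 2%:R *: mf (q2 k0 q) k0 l) (-1) (hD q)
    (in_Lie_scale _ hG)).
  by rewrite oppr_eq0 oner_eq0.
by move=> l; rewrite /D /w eqxx scaleN1r addrC.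
Qed.

Lemma from_sq k : inL (mf (q2 k k) k) -> forall a b, inL (mf (q2 a b) k).
Proof.
move=> hk.
have h1 : forall a, inL (mf (q2 a k) k).
  move=> a; case: (a =P k) => [->|/eqP ak]; first exact: hk.
  apply: (subst_mv hk ak (i := k)); rewrite 1?eq_sym //.
    by rewrite /q2 mnmDE mnm1E eqxx.
  rewrite /q2; mnm_tac.
move=> a b; case: (b =P k) => [->|/eqP bk]; first exact: h1.
apply: (subst_mv (h1 a) bk (i := k)); rewrite 1?eq_sym //.
  by rewrite /q2 !mnmDE !mnm1E eqxx addn1.
rewrite /q2; mnm_tac.
Qed.

Lemma deg2 a b k : inL (mf (q2 a b) k).
Proof.
have hne : forall k, k != o -> forall a b, inL (mf (q2 a b) k).
  move=> {}k ko; apply: from_sq; apply: (Garg ko) => i io; exact: Q0.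
case: (k =P o) => [->|/eqP ko]; last exact: hne.
apply: from_sq; apply: (@Garg o nlast); first by rewrite eq_sym nlast_o.
by move=> i _; apply: hne; exact: nlast_o.
Qed.


Lemma mdeg_sub1 (g : 'X_{1..m}) a : (0 < g a)%N -> mdeg (g - U_(a))%MM = (mdeg g).-1.
Proof.
move=> ga.
have le : (U_(a) <= g)%MM by apply/mnm_lepP => i; rewrite mnm1E; case: eqP => [<-|] //.
by rewrite -{2}(submK le) mdegD mdeg1 addn1.
Qed.

Lemma pos_of_mdeg (g : 'X_{1..m}) : (0 < mdeg g)%N -> exists a, (0 < g a)%N.
Proof.
move=> h; case: (pickP (fun a => (0 < g a)%N)) => [a ha|none]; first by exists a.
have e : g = 0%MM by apply/mnmP => i; rewrite mnm0E; move: (none i) => /=; lia.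
by move: h; rewrite e mdeg0.
Qed.

Lemma deg1 j i : inL (mf U_(j) i).
Proof.
apply: (@inL_solve _ _ (fun _ => 0) 2%:R (in_Lie_bracket (ce_all j) (deg2 j j i))
   (in_Lie_zero _)); first by rewrite pnatr_eq0.
move=> l; rewrite /ce bracket_mf mnm0E mulr0n scale0r addr0 /q2 mnmDE mnm1E eqxx.
have -> : (0 + (U_(j) + U_(j) - U_(j)))%MM = U_(j)%MM by mnm_tac.
by rewrite /mf; case: (l == j); case: (l == i); rewrite ?subr0 ?scaler0.
Qed.

Lemma mdeg2E (g : 'X_{1..m}) : mdeg g = 2%N -> exists a b, g = q2 a b.
Proof.
move=> hg; have [a ha] := pos_of_mdeg (ltac:(by rewrite hg) : (0 < mdeg g)%N).
have : mdeg (g - U_(a))%MM == 1%N by rewrite mdeg_sub1 // hg.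
case/mdeg1P => b /eqP hb; exists a, b.
by rewrite /q2 -hb; move: ha; mnm_tac.
Qed.

Lemma step d : (2 <= d)%N -> (forall g k, mdeg g = d -> inL (mf g k)) ->
  forall g k, mdeg g = d.+1 -> inL (mf g k).
Proof.
move=> d2 Hd.
have C1 : forall g k, mdeg g = d.+1 -> g k = 1%N -> inL (mf g k).
  move=> g k hg gk.
  have [j hj] := pos_of_mdeg (ltac:(rewrite mdeg_sub1 ?gk // hg; lia) :
     (0 < mdeg (g - U_(k))%MM)%N).
  have [i hi] := pos_of_mdeg (ltac:(rewrite !mdeg_sub1 ?gk // hg; lia) :
     (0 < mdeg (g - U_(k) - U_(j))%MM)%N).
  have ik : i != k.
    by apply/eqP => e; subst i; move: hi gk; rewrite !mnmBE !mnm1E eqxx; lia.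
  have jk : j != k.
    by apply/eqP => e; subst j; move: hj gk; rewrite !mnmBE !mnm1E eqxx; lia.
  have hgj : (0 < g j)%N by move: hj; rewrite mnmBE; lia.
  have hb : mdeg (g - U_(j))%MM = d by rewrite mdeg_sub1 // hg.
  have hbi : (0 < (g - U_(j))%MM i)%N.
    by move: hi; rewrite !mnmBE; lia.
  apply: (@inL_solve _ _ (fun _ => 0) ((g - U_(j))%MM i)%:R
     (in_Lie_bracket (deg2 i j i) (Hd _ k hb)) (in_Lie_zero _)).
    by rewrite pnatr_eq0 -lt0n.
  move=> l; rewrite bracket_mf addr0 /q2 mnmDE !mnm1E eq_sym (negbTE ik).
  rewrite eq_sym (negbTE jk) mulr0n scale0r.
  have -> : (U_(i) + U_(j) + (g - U_(j) - U_(i)))%MM = g.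
    by move: hgj hbi; rewrite mnmBE mnm1E; mnm_tac.
  by rewrite /mf; case: (l == k); case: (l == i); rewrite ?subr0 ?scaler0.
have C2 : forall g k j, mdeg g = d.+1 -> j != k -> (0 < g j)%N -> inL (mf g k).
  move=> g k j hg jk gj.
  case: (g k =P 1%N) => [gk1|/eqP gk1]; first exact: C1.
  have hb : mdeg (g - U_(j))%MM = d by rewrite mdeg_sub1 // hg.
  have br := in_Lie_bracket (deg2 j k k) (Hd _ k hb).
  have e2 : ((q2 j k - U_(k)) + (g - U_(j)))%MM = g.
    by move: gj; rewrite /q2; mnm_tac.
  have ak : q2 j k k = 1%N by rewrite /q2 mnmDE !mnm1E eqxx (negbTE jk).
  have bk : (g - U_(j))%MM k = g k by rewrite mnmBE mnm1E (negbTE jk) subn0.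
  case: (g k =P 0%N) => [gk0|/eqP gk0].
    apply: (@inL_solve _ _ (fun _ => 0) (-1) br (in_Lie_zero _)).
      by rewrite oppr_eq0 oner_eq0.
    move=> l; rewrite bracket_mf addr0 e2 ak bk gk0 mulr0n scale0r /mf.
    by case: (l == k); rewrite ?scale1r ?scaleN1r ?sub0r ?subr0 ?scaler0 ?oppr0.
  have e1 : (q2 j k + (g - U_(j) - U_(k)))%MM = g.
    by move: gj gk0; rewrite /q2; mnm_tac.
  apply: (@inL_solve _ _ (fun _ => 0) ((g k)%:R - 1) br (in_Lie_zero _)).
    by rewrite subr_eq0 -[1]/(1%:R) eqr_nat.
  move=> l; rewrite bracket_mf addr0 e1 e2 ak bk mulr1n scale1r /mf.
  by case: (l == k); rewrite ?scalerBl ?scale1r ?subr0 ?scaler0.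
move=> g k hg.
case: (pickP (fun j => (j != k) && (0 < g j)%N)) => [j /andP[jk gj]|none].
  exact: (C2 g k j).
have g0 : forall j, j != k -> g j = 0%N.
  by move=> j jk; move: (none j); rewrite jk /=; lia.
have gk : g k = d.+1.
  rewrite -hg mdegE (bigD1 k) //= big1 ?addn0 // => j jk; exact: g0.
pose j := if k == o then nlast else o.
have jk : j != k.
  rewrite /j; case: (k =P o) => [->|/eqP ko]; first exact: nlast_o.
  by rewrite eq_sym.
have ha : mdeg (g - U_(k))%MM = d by rewrite mdeg_sub1 ?gk // hg.
have br := in_Lie_bracket (Hd _ j ha) (deg2 j k k).
pose g' := ((g - U_(k) - U_(k)) + q2 j k)%MM.
have hg' : mdeg g' = d.+1.
  rewrite /g' mdegD !mdeg_sub1 ?gk ?hg /q2 ?mdegD ?mdeg1 //; last first.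
    by rewrite mnmBE mnm1E eqxx gk; lia.
  lia.
have g'j : g' j = 1%N.
  by rewrite /g' /q2 !mnmDE !mnmBE !mnm1E (g0 _ jk) eqxx eq_sym (negbTE jk).
have hC := C1 g' j hg' g'j.
apply: (@inL_solve _ _ (fun l => - (((g - U_(k))%MM k)%:R *: mf g' j l)) 1 br).
- by apply: (inL_ext (in_Lie_scale (- ((g - U_(k))%MM k)%:R) hC)) => l; rewrite scaleNr.
- exact: oner_neq0.
move=> l; rewrite bracket_mf scale1r.
have -> : (q2 j k) j = 1%N by rewrite /q2 mnmDE !mnm1E eqxx eq_sym (negbTE jk).
have -> : (g - U_(k) + (q2 j k - U_(j)))%MM = g.
  by move: gk; rewrite /q2; mnm_tac.
rewrite mulr1n scale1r /mf /g'; congr (_ - _).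
by case: (l == j); rewrite ?scaler0.
Qed.

Lemma all_deg d : forall g k, mdeg g = d -> inL (mf g k).
Proof.
elim: d => [|d IH] g k hg.
  by move/eqP: hg; rewrite mdeg_eq0 => /eqP ->; exact: ce_all.
case: d IH hg => [|[|d]] IH hg.
- by move/eqP/mdeg1P: hg => [j /eqP ->]; exact: deg1.
- by have [a [b ->]] := mdeg2E hg; exact: deg2.
- exact: (step _ IH).
Qed.

Lemma all_P (P : pvf) : inL P.
Proof.
pose F (k : 'I_m) : pvf := fun l => \sum_(g <- msupp (P k)) (P k)@_g *: mf g k l.
have hF : forall k, inL (F k).
  by move=> k; apply: inL_sum => g; apply: in_Lie_scale; by apply: (@all_deg (mdeg g)).
apply: (inL_ext (inL_sum (index_enum _) hF)) => l.
rewrite (bigD1 l) //= big1 ?addr0 => [|k kl].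
  by rewrite /F [RHS]mpolyE; apply: eq_bigr => g _; rewrite /mf eqxx.
by rewrite /F big1 // => g _; rewrite /mf eq_sym (negbTE kl) scaler0.
Qed.

End Main.

Theorem proposition2 (R : realType) (m : nat) (hm : (2 <= m)%N) :
  exists A B : 'M[R]_m,
    \tr A = 0 /\ \tr B = 0 /\
    forall P : pvf R m,
      in_Lie [:: linear_vf A; linear_vf B; @V3 R m; @V4 R m; @V5 R m] P.
Proof.
case: m hm => [|[|p]] // _.
exists (A R p), (B R p); split; first exact: trA.
split; first exact: trB.
exact: all_P.
Qed.
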